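(* For all $X,Y\in\mathbb{S}^n_{++}$ and all $s,t\in[0,1]$: (i) $X*_tY=Y*_{1-t}X$; (ii) $X*_s(X*_tY)=X*_{st}Y$; (iii) $(X*_sY)*_tY=X*_{s+t-st}Y$.
   Context: $\mathbb{S}^n_{++}$ denotes the set of real symmetric positive definite $n\times n$ matrices. For $X,Y\in\mathbb{S}^n_{++}$ the matrix $YX^{-1}$ has real positive eigenvalues; let $\alpha=\lambda_{\min}(YX^{-1})$ and $\beta=\lambda_{\max}(YX^{-1})$. For $0<\alpha\le\beta$ and $t\in\mathbb{R}$ set $\varphi_{\alpha\beta}(t)=\frac{\beta^t-\alpha^t}{\beta-\alpha}$ and $\psi_{\alpha\beta}(t)=\frac{\beta\alpha^t-\alpha\beta^t}{\beta-\alpha}$ if $\beta>\alpha$, and $\varphi_{\alpha\beta}(t)=t\alpha^{t-1}$, $\psi_{\alpha\beta}(t)=(1-t)\alpha^t$ if $\beta=\alpha$. The Thompson geodesic from $X$ to $Y$ is $X*_tY=\varphi_{\alpha\beta}(t)\,Y+\psi_{\alpha\beta}(t)\,X$. *)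

(* Defs.v *)
From HB Require Import structures.
From mathcomp Require Import all_boot all_order all_algebra.
From mathcomp Require Import boolp classical_sets reals exp.
Set Implicit Arguments. Unset Strict Implicit. Unset Printing Implicit Defensive.
Import Order.TTheory GRing.Theory Num.Theory.
Local Open Scope classical_set_scope.
Local Open Scope ring_scope.

Section Thompson.
Variable R : realType.

Definition posdef (n : nat) (A : 'M[R]_n) : Prop :=
  A^T = A /\ forall v : 'rV[R]_n, v != 0 -> 0 < (v *m A *m v^T) 0 0.

Definition spectrum (n : nat) (A : 'M[R]_n) : set R := [set a | eigenvalue A a].

Definition lambda_min (n : nat) (A : 'M[R]_n) : R := inf (spectrum A).
Definition lambda_max (n : nat) (A : 'M[R]_n) : R := sup (spectrum A).

Definition phi_ab (a b t : R) : R :=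
  if b == a then t * a `^ (t - 1) else (b `^ t - a `^ t) / (b - a).
Definition psi_ab (a b t : R) : R :=
  if b == a then (1 - t) * a `^ t else (b * a `^ t - a * b `^ t) / (b - a).

Definition thompson (n : nat) (X Y : 'M[R]_n) (t : R) : 'M[R]_n :=
  let a := lambda_min (Y *m invmx X) in
  let b := lambda_max (Y *m invmx X) in
  phi_ab a b t *: Y + psi_ab a b t *: X.

End Thompson.

(* Main.v *)
Require Import Defs.
From HB Require Import structures.
From mathcomp Require Import all_boot all_order all_algebra.
From mathcomp Require Import boolp classical_sets reals exp.
From mathcomp Require Import polyrcf complex spectral.
From mathcomp Require Import ring lra.
Set Implicit Arguments. Unset Strict Implicit. Unset Printing Implicit Defensive.
Import Order.TTheory GRing.Theory Num.Theory.
Local Open Scope ring_scope.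
Section H.
Variable R : realType.
Implicit Types (n : nat).

Definition qf n (v : 'rV[R]_n) (A : 'M[R]_n) : R := (v *m A *m v^T) 0 0.

Lemma posdef_unit n (X : 'M[R]_n) : posdef X -> X \in unitmx.
Proof.
case=> _ HX; rewrite unitmxE unitfE; apply/negP => /det0P [v v0 vX].
have := HX v v0; by rewrite vX mul0mx mxE ltxx.
Qed.

Lemma pencilP n (A B : 'M[R]_n) l : B \in unitmx ->
  eigenvalue (A *m invmx B) l <-> exists2 v : 'rV_n, v != 0 & v *m A = l *: (v *m B).
Proof.
move=> Bu; split.
  move=> /eigenvalueP [v Hv v0]; exists v => //.
  by rewrite scalemxAl -Hv mulmxA mulmxKV.
move=> [v v0 Hv]; apply/eigenvalueP; exists v => //.
by rewrite mulmxA Hv scalemxAl mulmxK.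
Qed.

Lemma pencil_pos n (X Y : 'M[R]_n) l : posdef X -> posdef Y ->
  eigenvalue (Y *m invmx X) l -> 0 < l.
Proof.
move=> HX HY /(pencilP _ _ (posdef_unit HX)) [v v0 Hv].
have hx := HX.2 v v0; have hy := HY.2 v v0.
move: hy; rewrite Hv -scalemxAl mxE => hy.
by rewrite -(pmulr_lgt0 _ hx).
Qed.

Lemma sup_max (S : set R) m : S m -> (forall x, S x -> x <= m) -> sup S = m.
Proof.
move=> Sm H; apply/le_anti/andP; split.
  by apply: ge_sup; [exists m | move=> x /H].
apply: sup_upper_bound => //; split; first by exists m.
by exists m => x /H.
Qed.

Lemma inf_min (S : set R) m : S m -> (forall x, S x -> m <= x) -> inf S = m.
Proof.
move=> Sm H; apply/le_anti/andP; split.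
  by apply: ge_inf => //; exists m => x /H.
by apply: lb_le_inf; [exists m | move=> x /H].
Qed.

Lemma seq_min (s : seq R) : s != [::] ->
  exists2 m, m \in s & forall x, x \in s -> m <= x.
Proof.
elim: s => // a [|b t] IH _.
  by exists a; rewrite ?mem_seq1 // => x; rewrite mem_seq1 => /eqP->.
have [m mi Hm] := IH isT.
have [am|ma] := leP a m.
  exists a; first by rewrite mem_head.
  move=> x; rewrite in_cons => /predU1P[->//|/Hm]; exact: le_trans.
exists m; first by rewrite in_cons mi orbT.
move=> x; rewrite in_cons => /predU1P[->|/Hm//]; exact: ltW.
Qed.

Lemma seq_max (s : seq R) : s != [::] ->
  exists2 m, m \in s & forall x, x \in s -> x <= m.
Proof.
elim: s => // a [|b t] IH _.
  by exists a; rewrite ?mem_seq1 // => x; rewrite mem_seq1 => /eqP->.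
have [m mi Hm] := IH isT.
have [am|ma] := leP a m.
  exists m; first by rewrite in_cons mi orbT.
  move=> x; rewrite in_cons => /predU1P[->//|/Hm//].
exists a; first by rewrite mem_head.
move=> x; rewrite in_cons => /predU1P[->//|/Hm] h; exact: (le_trans h (ltW ma)).
Qed.

Lemma set_minmax (P : R -> Prop) (s : seq R) : (exists x, P x) ->
  (forall x, P x -> x \in s) ->
  (exists2 m, P m & forall x, P x -> m <= x) /\ (exists2 m, P m & forall x, P x -> x <= m).
Proof.
move=> [x0 Px0] Hs.
pose s' := [seq x <- s | `[< P x >]].
have ins' x : (x \in s') = `[< P x >].
  rewrite mem_filter; case: asboolP => //= Px; exact: Hs.
have s'0 : s' != [::].
  by apply/negP => /eqP e; have := ins' x0; rewrite e in_nil; case: asboolP.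
split.
  have [m mi Hm] := seq_min s'0; exists m; first by move: mi; rewrite ins' => /asboolP.
  by move=> x Px; apply: Hm; rewrite ins'; apply/asboolP.
have [m mi Hm] := seq_max s'0; exists m; first by move: mi; rewrite ins' => /asboolP.
by move=> x Px; apply: Hm; rewrite ins'; apply/asboolP.
Qed.

End H.
Section C.
Variable R : realType.
Local Notation C := (R[i]).
Local Notation f := (real_complex R).
Local Notation Rec := (@complex.Re R).
Local Notation Imc := (@complex.Im R).

Lemma term_Re (x y : C) (a : R) :
  Rec (conjc x * (y * f a)) = a * (Rec x * Rec y + Imc x * Imc y).
Proof.
case: x => a1 b1; case: y => a2 b2.
transitivity (a1*(a2*a - b2*0) - (-b1)*(a2*0+b2*a)); first by [].
rewrite /=; ring.
Qed.

Lemma term_Im (x y : C) (a : R) :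
  Imc (conjc x * (y * f a)) = a * (Rec x * Imc y - Imc x * Rec y).
Proof.
case: x => a1 b1; case: y => a2 b2.
transitivity (a1*(a2*0+b2*a) + (-b1)*(a2*a - b2*0)); first by [].
rewrite /=; ring.
Qed.

Lemma Re_sum (I : finType) (F : I -> C) : Rec (\sum_i F i) = \sum_i Rec (F i).
Proof. by apply: (big_morph Rec) => // x y; case: x; case: y. Qed.
Lemma Im_sum (I : finType) (F : I -> C) : Imc (\sum_i F i) = \sum_i Imc (F i).
Proof. by apply: (big_morph Imc) => // x y; case: x; case: y. Qed.

Lemma qfE n (p : 'rV[R]_n) A : qf p A = \sum_j \sum_i A i j * (p 0 j * p 0 i).
Proof.
rewrite /qf mxE; apply: eq_bigr => j _; rewrite !mxE big_distrl /=.
by apply: eq_bigr => i _; ring.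
Qed.

Lemma S_real n (v : 'rV[C]_n) (A : 'M[R]_n) : A^T = A ->
  \sum_j conjc (v 0 j) * (v *m map_mx f A) 0 j =
  f (qf (map_mx Rec v) A + qf (map_mx Imc v) A).
Proof.
move=> As.
have -> : \sum_j conjc (v 0 j) * (v *m map_mx f A) 0 j =
   \sum_j \sum_i conjc (v 0 j) * (v 0 i * f (A i j)).
  by apply: eq_bigr => j _; rewrite mxE big_distrr; apply: eq_bigr => i _; rewrite ?mxE.
apply/eqP; rewrite eq_complex; apply/andP; split; apply/eqP.
  rewrite Re_sum /= !qfE -big_split /=; apply: eq_bigr => j _.
  rewrite Re_sum -big_split /=; apply: eq_bigr => i _.
  rewrite term_Re !mxE; ring.
rewrite Im_sum /=.
have -> : \sum_j Imc (\sum_i conjc (v 0 j) * (v 0 i * f (A i j))) =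
   \sum_j \sum_i A i j * (Rec (v 0 j) * Imc (v 0 i)) - 
   \sum_j \sum_i A i j * (Imc (v 0 j) * Rec (v 0 i)).
  rewrite -sumrB; apply: eq_bigr => j _; rewrite Im_sum -sumrB; apply: eq_bigr => i _.
  by rewrite term_Im mulrBr.
rewrite [X in _ - X]exchange_big /=.
apply/eqP; rewrite subr_eq0; apply/eqP; apply: eq_bigr => j _; apply: eq_bigr => i _.
have -> : A j i = A i j by rewrite -[in LHS]As mxE.
by congr (_ * _); rewrite mulrC.
Qed.
End C.
Section C2.
Variable R : realType.
Local Notation C := (R[i]).
Local Notation f := (real_complex R).
Local Notation Rec := (@complex.Re R).
Local Notation Imc := (@complex.Im R).

Lemma qf_ge0 n (X : 'M[R]_n) p : posdef X -> 0 <= qf p X.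
Proof.
move=> HX; case: (eqVneq p 0) => [->|p0]; first by rewrite /qf !mul0mx mxE.
exact: ltW (HX.2 p p0).
Qed.

Lemma real_eig n (X Y : 'M[R]_n) : (0 < n)%N -> posdef X -> posdef Y ->
  exists r, eigenvalue (Y *m invmx X) r.
Proof.
move=> n0 HX HY; set M := Y *m invmx X.
have Xu := posdef_unit HX.
have [z Hz] := eigenvalue_closed (map_mx f M) n0.
have [v Hv v0] := eigenvalueP Hz.
have HvY : v *m map_mx f Y = z *: (v *m map_mx f X).
  have -> : Y = M *m X by rewrite /M mulmxKV.
  by rewrite map_mxM mulmxA Hv scalemxAl.
have key : (\sum_j conjc (v 0 j) * (v *m map_mx f Y) 0 j) =
   z * \sum_j conjc (v 0 j) * (v *m map_mx f X) 0 j.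
  by rewrite HvY big_distrr; apply: eq_bigr => j _; rewrite mxE mulrCA.
rewrite (S_real _ HX.1) (S_real _ HY.1) in key.
set p := map_mx Rec v in key; set q := map_mx Imc v in key.
set x := qf p X + qf q X in key; set y := qf p Y + qf q Y in key.
have xpos : 0 < x.
  have hp := qf_ge0 p HX; have hq := qf_ge0 q HX.
  case: (eqVneq p 0) => p0; last by rewrite /x; have : 0 < qf p X := HX.2 p p0; lra.
  case: (eqVneq q 0) => q0; last by rewrite /x; have : 0 < qf q X := HX.2 q q0; lra.
  exfalso; move/eqP: v0; apply; apply/rowP => j.
  have h1 : p 0 j = 0 by rewrite p0 mxE.
  have h2 : q 0 j = 0 by rewrite q0 mxE.
  move: h1 h2; rewrite !mxE; case: (v 0 j) => a b /= -> ->; by [].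
exists (y / x).
have zE : z = f (y / x).
  have fx0 : f x != 0 by rewrite fmorph_eq0 gt_eqF.
  apply: (mulIf fx0); by rewrite -rmorphM divfK ?gt_eqF // key.
have H : eigenvalue (map_mx f M) (f (y / x)) by rewrite -zE.
move: H; rewrite eigenvalue_root_char -map_char_poly fmorph_root => H.
by rewrite eigenvalue_root_char.
Qed.
End C2.
Section D.
Variable R : realType.

Lemma spec_fin n (M : 'M[R]_n) x : eigenvalue M x -> x \in rootsR (char_poly M).
Proof.
move=> H; have cp0 : char_poly M != 0 by apply: monic_neq0; apply: char_poly_monic.
by rewrite -(roots_on_rootsR cp0) -eigenvalue_root_char H andbT in_itv.

Qed.

Lemma lminE n (M : 'M[R]_n) m : eigenvalue M m ->
  (forall l, eigenvalue M l -> m <= l) -> lambda_min M = m.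
Proof. by move=> Hm H; apply: inf_min. Qed.

Lemma lmaxE n (M : 'M[R]_n) m : eigenvalue M m ->
  (forall l, eigenvalue M l -> l <= m) -> lambda_max M = m.
Proof. by move=> Hm H; apply: sup_max. Qed.

Lemma spec_facts n (X Y : 'M[R]_n) : (0 < n)%N -> posdef X -> posdef Y ->
  [/\ 0 < lambda_min (Y *m invmx X), lambda_min (Y *m invmx X) <= lambda_max (Y *m invmx X),
      eigenvalue (Y *m invmx X) (lambda_min (Y *m invmx X)),
      eigenvalue (Y *m invmx X) (lambda_max (Y *m invmx X)) &
      forall l, eigenvalue (Y *m invmx X) l ->
        lambda_min (Y *m invmx X) <= l <= lambda_max (Y *m invmx X)].
Proof.
move=> n0 HX HY; set M := Y *m invmx X.
have [[m Hm Hm'] [m2 Hm2 Hm2']] :=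
  @set_minmax R (fun l => eigenvalue M l) (rootsR (char_poly M)) (real_eig n0 HX HY)
   (fun x H => spec_fin H).
rewrite (lminE Hm Hm') (lmaxE Hm2 Hm2'); split => //.
- exact: pencil_pos HX HY Hm.
- exact: Hm'.
- by move=> l Hl; rewrite Hm' ?Hm2'.
Qed.

Lemma swap_eig n (X Y : 'M[R]_n) l : posdef X -> posdef Y ->
  eigenvalue (Y *m invmx X) l -> eigenvalue (X *m invmx Y) l^-1.
Proof.
move=> HX HY Hl; have lp := pencil_pos HX HY Hl.
move: Hl => /(pencilP _ _ (posdef_unit HX)) [v v0 Hv].
apply/(pencilP _ _ (posdef_unit HY)); exists v => //.
by rewrite Hv scalerA mulVf ?gt_eqF // scale1r.
Qed.

Lemma inv_minmax n (X Y : 'M[R]_n) : (0 < n)%N -> posdef X -> posdef Y ->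
  lambda_min (X *m invmx Y) = (lambda_max (Y *m invmx X))^-1 /\
  lambda_max (X *m invmx Y) = (lambda_min (Y *m invmx X))^-1.
Proof.
move=> n0 HX HY.
have [a0 ab Ha Hb Hl] := spec_facts n0 HX HY.
have b0 : 0 < lambda_max (Y *m invmx X) by apply: lt_le_trans ab.
split.
  apply: lminE; first exact: swap_eig.
  move=> l H; have lp := pencil_pos HY HX H.
  have /Hl /andP[_ h] := swap_eig HY HX H.
  by rewrite -(invrK l) lef_pV2 ?posrE ?invr_gt0.
apply: lmaxE; first exact: swap_eig.
move=> l H; have lp := pencil_pos HY HX H.
have /Hl /andP[h _] := swap_eig HY HX H.
by rewrite -(invrK l) lef_pV2 ?posrE ?invr_gt0.
Qed.

Lemma affine_minmax n (X Y : 'M[R]_n) (ph ps : R) : (0 < n)%N -> posdef X -> posdef Y ->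
  0 <= ph ->
  lambda_min ((ph *: Y + ps *: X) *m invmx X) = ph * lambda_min (Y *m invmx X) + ps /\
  lambda_max ((ph *: Y + ps *: X) *m invmx X) = ph * lambda_max (Y *m invmx X) + ps.
Proof.
move=> n0 HX HY ph0.
have Xu := posdef_unit HX.
have [a0 ab Ha Hb Hl] := spec_facts n0 HX HY.
have img c : eigenvalue (Y *m invmx X) c -> eigenvalue ((ph *: Y + ps *: X) *m invmx X) (ph * c + ps).
  move=> /(pencilP _ _ Xu) [v v0 Hv]; apply/(pencilP _ _ Xu); exists v => //.
  by rewrite mulmxDr -!scalemxAr Hv scalerA scalerDl.
have back l : eigenvalue ((ph *: Y + ps *: X) *m invmx X) l ->
   ph * lambda_min (Y *m invmx X) + ps <= l <= ph * lambda_max (Y *m invmx X) + ps.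
  move=> /(pencilP _ _ Xu) [v v0 Hv].
  rewrite mulmxDr -!scalemxAr in Hv.
  have vX0 : v *m X != 0.
    by apply: contra v0 => /eqP h; rewrite -(mulmxK Xu v) h mul0mx.
  have [ph00|php] := eqVneq ph 0.
    move: Hv; rewrite ph00 scale0r add0r => /eqP; rewrite -subr_eq0 -scalerBl scaler_eq0.
    by rewrite (negPf vX0) orbF subr_eq0 => /eqP ->; rewrite !mul0r add0r lexx.
  have phpos : 0 < ph by rewrite lt_def php.
  have H : eigenvalue (Y *m invmx X) ((l - ps) / ph).
    apply/(pencilP _ _ Xu); exists v => //.
    apply: (scalerI php); rewrite scalerA mulrCA mulfV // mulr1 scalerBl -Hv.
    by rewrite addrK.
  have /andP[h1 h2] := Hl _ H.
  have -> : l = ph * ((l - ps) / ph) + ps by rewrite mulrC divfK // subrK.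
  by rewrite !lerD2r !ler_pM2l // h1 h2.
split.
  apply: lminE; first exact: img.
  by move=> l /back /andP[].
apply: lmaxE; first exact: img.
by move=> l /back /andP[].
Qed.
End D.
Section G.
Variable R : realType.
Implicit Types a b s t u : R.

Lemma powV a u : 0 < a -> (a^-1) `^ u = a `^ (- u).
Proof. by move=> a0; rewrite -powR_inv1 ?ltW // -powRrM mulN1r. Qed.

Lemma powm1 a u : 0 < a -> a `^ (u - 1) = a `^ u / a.
Proof.
move=> a0; rewrite powRB; last by rewrite (gt_eqF a0) implybT.
by rewrite powRr1 // ltW.
Qed.

Lemma powMst a s t : a `^ (s * t) = (a `^ t) `^ s.
Proof. by rewrite mulrC powRrM. Qed.

Lemma G1 a b t : 0 < a -> a <= b ->
  phi_ab b^-1 a^-1 (1 - t) = psi_ab a b t /\ psi_ab b^-1 a^-1 (1 - t) = phi_ab a b t.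
Proof.
move=> a0 ab; rewrite /phi_ab /psi_ab.
have [-> | ne] := eqVneq b a.
  rewrite eqxx !powV //.
  have -> : - (1 - t - 1) = t by ring.
  have -> : 1 - (1 - t) = t by ring.
  by have -> : - (1 - t) = t - 1 by ring.
have ab' : a < b by rewrite lt_def ne ab.
have b0 : 0 < b by apply: lt_trans ab'.
have -> : (a^-1 == b^-1) = false.
  by apply/negbTE; apply: contra ne => /eqP /invr_inj ->.
rewrite !powV //.
have -> : - (1 - t) = t - 1 by ring.
rewrite !powm1 //.
have ba : b - a != 0 by rewrite subr_eq0.
have a0' : a != 0 by rewrite gt_eqF.
have b0' : b != 0 by rewrite gt_eqF.
move: (a `^ t) (b `^ t) => A B.
by split; field; rewrite ba a0' b0'.
Qed.

Lemma G2 a b s t : 0 < a -> a <= b -> 0 <= t ->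
  phi_ab (a `^ t) (b `^ t) s * phi_ab a b t = phi_ab a b (s * t) /\
  phi_ab (a `^ t) (b `^ t) s * psi_ab a b t + psi_ab (a `^ t) (b `^ t) s = psi_ab a b (s * t).
Proof.
move=> a0 ab t0; rewrite /phi_ab /psi_ab.
have At0 : a `^ t != 0 by rewrite gt_eqF // powR_gt0.
have a0' : a != 0 by rewrite gt_eqF.
have [-> | ne] := eqVneq b a.
  rewrite !eqxx !powm1 ?powR_gt0 // -!powMst.
  move: (a `^ t) (a `^ (s * t)) At0 => A As A0.
  by split; field; rewrite ?A0 ?a0'.
have ab' : a < b by rewrite lt_def ne ab.
have b0 : 0 < b by apply: lt_trans ab'.
have b0' : b != 0 by rewrite gt_eqF.
have ba : b - a != 0 by rewrite subr_eq0.
have [t00 | tp] := eqVneq t 0.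
  rewrite t00 mulr0 !powRr0 eqxx powR1.
  split; first by rewrite subrr !mul0r mulr0.
  by field; rewrite ba.
have tpos : 0 < t by rewrite lt_def tp t0.
have AB : a `^ t < b `^ t by apply: gt0_ltr_powR => //; rewrite nnegrE ltW.
rewrite (gt_eqF AB) -!powMst.
have BA : b `^ t - a `^ t != 0 by rewrite subr_eq0 gt_eqF.
move: (a `^ t) (b `^ t) (a `^ (s * t)) (b `^ (s * t)) BA => A B As Bs BA.
by split; field; rewrite ?BA ?ba.
Qed.

Lemma G3 a b t : 0 < a -> a <= b ->
  phi_ab a b t * a + psi_ab a b t = a `^ t /\ phi_ab a b t * b + psi_ab a b t = b `^ t.
Proof.
move=> a0 ab; rewrite /phi_ab /psi_ab.
have a0' : a != 0 by rewrite gt_eqF.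
have [-> | ne] := eqVneq b a.
  rewrite powm1 //; move: (a `^ t) => A.
  by split; field.
have ba : b - a != 0 by rewrite subr_eq0.
move: (a `^ t) (b `^ t) => A B.
by split; field.
Qed.

Lemma G4 a b t : 0 < a -> a <= b -> 0 <= t -> 0 <= phi_ab a b t.
Proof.
move=> a0 ab t0; rewrite /phi_ab.
have [_ | ne] := eqVneq b a; first by rewrite mulr_ge0 // powR_ge0.
have ab' : a < b by rewrite lt_def ne ab.
rewrite divr_ge0 // ?subr_ge0 //.
have [-> | tp] := eqVneq t 0; first by rewrite !powRr0.
apply: ltW; apply: gt0_ltr_powR => //; first by rewrite lt_def tp t0.
  by rewrite nnegrE ltW.
by rewrite nnegrE ltW // (lt_trans a0).
Qed.

Lemma G5 a b t : 0 < a -> a <= b -> t <= 1 -> 0 <= psi_ab a b t.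
Proof.
move=> a0 ab t1; rewrite /psi_ab.
have [_ | ne] := eqVneq b a; first by rewrite mulr_ge0 ?powR_ge0 // subr_ge0.
have ab' : a < b by rewrite lt_def ne ab.
have b0 : 0 < b by apply: lt_trans ab'.
rewrite divr_ge0 // ?subr_ge0 //.
(* a * b^t <= b * a^t  iff b^(t-1) <= a^(t-1) ... *)
have e1 : a * b `^ t = a * b * b `^ (t - 1) by rewrite powm1 //; field; rewrite gt_eqF.
have e2 : b * a `^ t = a * b * a `^ (t - 1) by rewrite powm1 //; field; rewrite gt_eqF.
rewrite e1 e2; apply: ler_wpM2l; first by rewrite mulr_ge0 // ltW.
have [-> | tp] := eqVneq t 1; first by rewrite subrr !powRr0.
have -> : t - 1 = - (1 - t) by ring.
rewrite -!powV //.
apply: ltW; apply: gt0_ltr_powR.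
- by rewrite subr_gt0 lt_def eq_sym tp t1.
- by rewrite nnegrE invr_ge0 ltW.
- by rewrite nnegrE invr_ge0 ltW.
by rewrite ltf_pV2.
Qed.
End G.
Section Main.
Variable R : realType.

Lemma posdef_comb n (X Y : 'M[R]_n) ph ps : posdef X -> posdef Y -> 0 <= ph -> 0 <= ps ->
  (ph != 0) || (ps != 0) -> posdef (ph *: Y + ps *: X).
Proof.
move=> HX HY ph0 ps0 nz; split.
  by rewrite linearD !linearZ /= HX.1 HY.1.
move=> v v0; have hX : 0 < qf v X := HX.2 v v0; have hY : 0 < qf v Y := HY.2 v v0.
rewrite mulmxDr mulmxDl -!scalemxAr -!scalemxAl mxE [X in _ + X]mxE [X in X + _]mxE.
rewrite -/(qf v Y) -/(qf v X).
have [e|ne] := eqVneq ph 0.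
  move: nz; rewrite e eqxx /= => nz; have psp : 0 < ps by rewrite lt_def nz ps0.
  by rewrite mul0r add0r mulr_gt0.
have php : 0 < ph by rewrite lt_def ne ph0.
have := mulr_gt0 php hY; have := mulr_ge0 ps0 (ltW hX); lra.
Qed.

Lemma part_i n (X Y : 'M[R]_n) t : (0 < n)%N -> posdef X -> posdef Y ->
  thompson X Y t = thompson Y X (1 - t).
Proof.
move=> n0 HX HY; rewrite /thompson /=.
have [-> ->] := inv_minmax n0 HX HY.
have [a0 ab _ _ _] := spec_facts n0 HX HY.
have [-> ->] := G1 t a0 ab.
by rewrite addrC.
Qed.

Lemma part_ii n (X Y : 'M[R]_n) s t : (0 < n)%N -> posdef X -> posdef Y -> 0 <= t ->
  thompson X (thompson X Y t) s = thompson X Y (s * t).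
Proof.
move=> n0 HX HY t0; rewrite /thompson /=.
have [a0 ab _ _ _] := spec_facts n0 HX HY.
move: a0 ab.
set a := lambda_min (Y *m invmx X); set b := lambda_max (Y *m invmx X) => a0 ab.
have [-> ->] := affine_minmax (psi_ab a b t) n0 HX HY (G4 a0 ab t0).
have [-> ->] := G3 t a0 ab.
have [g1 g2] := G2 s a0 ab t0.
by rewrite scalerDr !scalerA -addrA -scalerDl g1 g2.
Qed.

Lemma thompson_posdef n (X Y : 'M[R]_n) s : (0 < n)%N -> posdef X -> posdef Y -> 0 <= s <= 1 ->
  posdef (thompson X Y s).
Proof.
move=> n0 HX HY /andP[s0 s1]; rewrite /thompson /=.
have [a0 ab _ _ _] := spec_facts n0 HX HY.
apply: posdef_comb => //; first exact: G4.
  exact: G5.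
have [g _] := G3 s a0 ab.
rewrite -negb_and; apply/negP => /andP[/eqP e1 /eqP e2].
have := powR_gt0 s a0; rewrite -g e1 e2 mul0r addr0 ltxx //.
Qed.

Lemma part_iii n (X Y : 'M[R]_n) s t : (0 < n)%N -> posdef X -> posdef Y ->
  0 <= s <= 1 -> 0 <= t <= 1 ->
  thompson (thompson X Y s) Y t = thompson X Y (s + t - s * t).
Proof.
move=> n0 HX HY hs /andP[t0 t1].
have HZ := thompson_posdef n0 HX HY hs.
rewrite (part_i t n0 HZ HY) (part_i s n0 HX HY).
rewrite part_ii //; last by move: hs => /andP[_ ?]; rewrite subr_ge0.
rewrite (part_i _ n0 HY HX); congr thompson; ring.
Qed.
End Main.

Theorem lemma4p1 (R : realType) (n : nat) (X Y : 'M[R]_n) (s t : R) :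
  posdef X -> posdef Y -> 0 <= s <= 1 -> 0 <= t <= 1 ->
  [/\ thompson X Y t = thompson Y X (1 - t),
      thompson X (thompson X Y t) s = thompson X Y (s * t)
    & thompson (thompson X Y s) Y t = thompson X Y (s + t - s * t)].
Proof.
case: n X Y => [|n] X Y HX HY hs ht.
  by split; rewrite [LHS]flatmx0 [RHS]flatmx0.
have n0 : (0 < n.+1)%N by [].
split.
- exact: part_i.
- by apply: part_ii => //; case/andP: ht.
- exact: part_iii.
Qed.
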